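(* Let $(G,\alpha,\mathcal A)$ and $(G,\beta,\mathcal B)$ be unital $C^*$-dynamical systems of a finite group $G$, let $E$ be a $\mathcal B$-$\mathcal A$ Hilbert bimodule which is full with respect to both inner products, and let $\eta$ be a $(\beta,\alpha)$-compatible action of $G$ on $E$. If $\eta$ has the Rokhlin property, then $\eta$ is outer.
   Context: A $\mathcal B$-$\mathcal A$ Hilbert bimodule $E$ is a left Hilbert $\mathcal B$-module and right Hilbert $\mathcal A$-module with ${}_{\mathcal B}\langle x,y\rangle z=x\langle y,z\rangle_{\mathcal A}$; full means both inner products have dense span in $\mathcal B$, resp. $\mathcal A$. A $(\beta,\alpha)$-compatible action: $\eta_g$ invertible linear maps, $g\mapsto\eta_g$ a homomorphism, with $\eta_g(bx)=\beta_g(b)\eta_g(x)$, $\eta_g(xa)=\eta_g(x)\alpha_g(a)$, ${}_{\mathcal B}\langle\eta_gx,\eta_gy\rangle=\beta_g({}_{\mathcal B}\langle x,y\rangle)$, $\langle\eta_gx,\eta_gy\rangle_{\mathcal A}=\alpha_g(\langle x,y\rangle_{\mathcal A})$. Rokhlin property of $\eta$: for every $\epsilon>0$, finite $S_1,S_2\subset E$, $S_3\subset\mathcal B$, $S_4\subset\mathcal A$ there are mutually orthogonal positive contractions $(a_g)_{g\in G}\subset\mathcal A$ and $(b_g)_{g\in G}\subset\mathcal B$ with $\|\sum_ga_gu-u\|<\epsilon$ ($u\in S_2^*\cup S_4$), $\|\sum_gb_gv-v\|<\epsilon$ ($v\in S_1\cup S_3$), $\|\alpha_h(a_g)-a_{hg}\|<\epsilon$,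 $\|\beta_h(b_g)-b_{hg}\|<\epsilon$, $\|xa_g-b_gx\|<\epsilon$, $\|tb_g-b_gt\|<\epsilon$, $\|a_ga-aa_g\|<\epsilon$, $\|a_gy^*-y^*b_g\|<\epsilon$ for all $x\in S_1,y\in S_2,t\in S_3,a\in S_4$, $g,h\in G$. For unitaries $u\in\mathcal A$, $u'\in\mathcal B$, $\mathrm{Ad}(u',u)(x):=u'^*xu$. $\eta$ is outer if for every $t\in G\setminus\{e\}$, $\eta_t\ne\mathrm{Ad}(u',u)$ for all unitaries $u\in\mathcal A$, $u'\in\mathcal B$. *)

(* Defs.v *)
From HB Require Import structures.
From mathcomp Require Import all_boot all_order fingroup all_algebra.
From mathcomp Require Import complex reals.
Set Implicit Arguments. Unset Strict Implicit. Unset Printing Implicit Defensive.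
Import Order.TTheory GRing.Theory Num.Theory.
Local Open Scope ring_scope.
Local Open Scope complex_scope.

Section Defs.
Variable R : realType.
Local Notation C := R[i].

Definition complete_wrt (V : zmodType) (n : V -> R) : Prop :=
  forall u : nat -> V,
    (forall e : R, 0 < e -> exists N : nat, forall p q : nat,
        (N <= p)%N -> (N <= q)%N -> n (u p - u q) < e) ->
    exists l : V, forall e : R, 0 < e -> exists N : nat, forall p : nat,
        (N <= p)%N -> n (u p - l) < e.

Definition is_cstar_algebra (A : algType C) (st : A -> A) (nrm : A -> R) : Prop :=
  [/\
   [/\ (forall a b : A, st (a + b) = st a + st b),
      (forall (c : C) (a : A), st (c *: a) = conjc c *: st a),
      (forall a b : A, st (a * b) = st b * st a) &
      (forall a : A, st (st a) = a)],
   [/\ (forall a : A, nrm a = 0 <-> a = 0),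
      (forall a b : A, nrm (a + b) <= nrm a + nrm b),
      (forall (c : C) (a : A), (nrm (c *: a))%:C = `|c| * (nrm a)%:C) &
      (forall a b : A, nrm (a * b) <= nrm a * nrm b)],
    (forall a : A, nrm (st a * a) = nrm a ^+ 2) &
    complete_wrt nrm].

Definition cpositive (A : algType C) (st : A -> A) (a : A) : Prop :=
  exists b : A, a = st b * b.

Definition positive_contraction (A : algType C) (st : A -> A) (nrm : A -> R)
  (a : A) : Prop := cpositive st a /\ nrm a <= 1.

Definition unitary (A : algType C) (st : A -> A) (u : A) : Prop :=
  st u * u = 1 /\ u * st u = 1.

Definition star_automorphism (A : algType C) (st : A -> A) (f : A -> A) : Prop :=
  [/\ (forall a b : A, f (a + b) = f a + f b) /\
      (forall (c : C) (a : A), f (c *: a) = c *: f a),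
      (forall a b : A, f (a * b) = f a * f b),
      f 1 = 1,
      (forall a : A, f (st a) = st (f a)) &
      bijective f].

Definition cstar_action (G : finGroupType) (A : algType C) (st : A -> A)
  (alpha : G -> A -> A) : Prop :=
  [/\ (forall g : G, star_automorphism st (alpha g)),
      (forall g h : G, alpha (g * h)%g =1 alpha g \o alpha h) &
      alpha 1%g =1 id].

(* B-A Hilbert bimodules.  E is a complex vector space, [lb] the left  *)
(* B-action, [ra] the right A-action, [ipB] = _B<.,.>, [ipA] = <.,.>_A. *)
Definition right_hilbert_module (A : algType C) (stA : A -> A) (nA : A -> R)
  (E : lmodType C) (ra : E -> A -> E) (ipA : E -> E -> A) : Prop :=
  [/\
      [/\ (forall (x y : E) (a : A), ra (x + y) a = ra x a + ra y a),
          (forall (x : E) (a b : A), ra x (a + b) = ra x a + ra x b),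
          (forall (x : E) (a b : A), ra (ra x a) b = ra x (a * b)),
          (forall (c : C) (x : E) (a : A), ra (c *: x) a = c *: ra x a) &
          (forall (c : C) (x : E) (a : A), ra x (c *: a) = c *: ra x a)],
      [/\ (forall x y z : E, ipA x (y + z) = ipA x y + ipA x z),
          (forall (c : C) (x y : E), ipA x (c *: y) = c *: ipA x y),
          (forall (x y : E) (a : A), ipA x (ra y a) = ipA x y * a) &
          (forall x y : E, stA (ipA x y) = ipA y x)],
      (forall x : E, cpositive stA (ipA x x)),
      (forall x : E, ipA x x = 0 -> x = 0) &
      complete_wrt (fun x : E => Num.sqrt (nA (ipA x x)))].

Definition left_hilbert_module (B : algType C) (stB : B -> B) (nB : B -> R)
  (E : lmodType C) (lb : B -> E -> E) (ipB : E -> E -> B) : Prop :=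
  [/\
      [/\ (forall (b : B) (x y : E), lb b (x + y) = lb b x + lb b y),
          (forall (a b : B) (x : E), lb (a + b) x = lb a x + lb b x),
          (forall (a b : B) (x : E), lb a (lb b x) = lb (a * b) x),
          (forall (c : C) (b : B) (x : E), lb b (c *: x) = c *: lb b x) &
          (forall (c : C) (b : B) (x : E), lb (c *: b) x = c *: lb b x)],
      [/\ (forall x y z : E, ipB (x + y) z = ipB x z + ipB y z),
          (forall (c : C) (x y : E), ipB (c *: x) y = c *: ipB x y),
          (forall (b : B) (x y : E), ipB (lb b x) y = b * ipB x y) &
          (forall x y : E, stB (ipB x y) = ipB y x)],
      (forall x : E, cpositive stB (ipB x x)),
      (forall x : E, ipB x x = 0 -> x = 0) &
      complete_wrt (fun x : E => Num.sqrt (nB (ipB x x)))].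

Definition hilbert_bimodule (A B : algType C) (stA : A -> A) (nA : A -> R)
  (stB : B -> B) (nB : B -> R) (E : lmodType C) (lb : B -> E -> E)
  (ra : E -> A -> E) (ipB : E -> E -> B) (ipA : E -> E -> A) : Prop :=
  [/\ left_hilbert_module stB nB lb ipB,
      right_hilbert_module stA nA ra ipA,
      (forall (b : B) (x : E) (a : A), ra (lb b x) a = lb b (ra x a)) &
      (forall x y z : E, lb (ipB x y) z = ra x (ipA y z))].

Definition full_ip (A : algType C) (nA : A -> R) (E : Type) (ip : E -> E -> A)
  : Prop :=
  forall (a : A) (e : R), 0 < e ->
    exists s : seq ((C * E) * E),
      nA (a - \sum_(p <- s) p.1.1 *: ip p.1.2 p.2) < e.

Definition hnorm (A : algType C) (nA : A -> R) (E : Type) (ipA : E -> E -> A)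
  (x : E) : R := Num.sqrt (nA (ipA x x)).

Definition compatible_action (G : finGroupType) (A B : algType C)
  (E : lmodType C) (lb : B -> E -> E) (ra : E -> A -> E)
  (ipB : E -> E -> B) (ipA : E -> E -> A)
  (alpha : G -> A -> A) (beta : G -> B -> B) (eta : G -> E -> E) : Prop :=
  [/\ (forall g : G, (forall x y : E, eta g (x + y) = eta g x + eta g y) /\
                     (forall (c : C) (x : E), eta g (c *: x) = c *: eta g x)),
      (forall g : G, bijective (eta g)),
      (forall g h : G, eta (g * h)%g =1 eta g \o eta h) &
      [/\ (forall (g : G) (b : B) (x : E), eta g (lb b x) = lb (beta g b) (eta g x)),
          (forall (g : G) (x : E) (a : A), eta g (ra x a) = ra (eta g x) (alpha g a)),
          (forall (g : G) (x y : E), ipB (eta g x) (eta g y) = beta g (ipB x y)) &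
          (forall (g : G) (x y : E), ipA (eta g x) (eta g y) = alpha g (ipA x y))]].

(* Rokhlin property.  The conditions on S_2^* (adjoints y^* in the dual
   bimodule) are expressed through y itself, using a.y^* = (y a^* )^*,
   y^* b = (b^* y)^* and the isometry of y |-> y^*. *)
Definition rokhlin (G : finGroupType) (A B : algType C)
  (stA : A -> A) (nA : A -> R) (stB : B -> B) (nB : B -> R)
  (E : lmodType C) (lb : B -> E -> E) (ra : E -> A -> E) (ipA : E -> E -> A)
  (alpha : G -> A -> A) (beta : G -> B -> B) : Prop :=
  forall (e : R), 0 < e ->
  forall (S1 S2 : seq E) (S3 : seq B) (S4 : seq A),
  exists (a : G -> A) (b : G -> B),
    [/\ [/\ (forall g : G, positive_contraction stA nA (a g)),
            (forall g : G, positive_contraction stB nB (b g)),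
            (forall g h : G, g != h -> a g * a h = 0) &
            (forall g h : G, g != h -> b g * b h = 0)],
        [/\ (forall y, y \in S2 -> hnorm nA ipA (ra y (\sum_(g : G) a g) - y) < e),
            (forall u, u \in S4 -> nA ((\sum_(g : G) a g) * u - u) < e),
            (forall v, v \in S1 -> hnorm nA ipA (lb (\sum_(g : G) b g) v - v) < e) &
            (forall v, v \in S3 -> nB ((\sum_(g : G) b g) * v - v) < e)],
        (forall g h : G, nA (alpha h (a g) - a (h * g)%g) < e),
        (forall g h : G, nB (beta h (b g) - b (h * g)%g) < e) &
        [/\ (forall (x : E) (g : G), x \in S1 ->
               hnorm nA ipA (ra x (a g) - lb (b g) x) < e),
            (forall (t : B) (g : G), t \in S3 -> nB (t * b g - b g * t) < e),
            (forall (c : A) (g : G), c \in S4 -> nA (a g * c - c * a g) < e) &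
            (forall (y : E) (g : G), y \in S2 ->
               hnorm nA ipA (ra y (a g) - lb (b g) y) < e)]].

Definition Ad (A B : algType C) (stB : B -> B) (E : Type)
  (lb : B -> E -> E) (ra : E -> A -> E) (u' : B) (u : A) : E -> E :=
  fun x => ra (lb (stB u') x) u.

Definition outer (G : finGroupType) (A B : algType C)
  (stA : A -> A) (stB : B -> B) (E : Type)
  (lb : B -> E -> E) (ra : E -> A -> E) (eta : G -> E -> E) : Prop :=
  forall t : G, t != 1%g ->
  forall (u : A) (u' : B), unitary stA u -> unitary stB u' ->
    eta t <> Ad stB lb ra u' u.

End Defs.

(* Main.v *)
Require Import Defs.
From HB Require Import structures.
From mathcomp Require Import all_boot all_order fingroup all_algebra.
From mathcomp Require Import complex reals ring lra.
Set Implicit Arguments. Unset Strict Implicit. Unset Printing Implicit Defensive.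
Import Order.TTheory GRing.Theory Num.Theory.
Local Open Scope ring_scope.
Local Open Scope complex_scope.

Section Norm.
Variable R : realType.
Variable A : algType R[i].
Variables (st : A -> A) (n : A -> R).
Hypothesis hA : is_cstar_algebra st n.

Lemma n0 : n 0 = 0.
Proof. by case: hA => _ [h _ _ _] _ _; exact/(h 0).2. Qed.

Lemma n_eq0 a : n a = 0 -> a = 0.
Proof. by case: hA => _ [h _ _ _] _ _; exact/(h a).1. Qed.

Lemma nD a b : n (a + b) <= n a + n b.
Proof. by case: hA => _ [_ h _ _] _ _; apply/h. Qed.

Lemma nM a b : n (a * b) <= n a * n b.
Proof. by case: hA => _ [_ _ _ h] _ _; apply/h. Qed.

Lemma nN a : n (- a) = n a.
Proof.
case: hA => _ [_ _ h _] _ _.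
have := h (-1) a; rewrite scaleN1r normrN1 mul1r.
by case.
Qed.

Lemma n_ge0 a : 0 <= n a.
Proof.
have := nD a (- a); rewrite subrr n0 nN => H.
by rewrite -(@pmulr_rge0 _ 2) // mulr2n mulrDl mul1r.
Qed.

Lemma nSub a b : n (a - b) <= n a + n b.
Proof. by rewrite -(nN b) nD. Qed.

Lemma st_mul a b : st (a * b) = st b * st a.
Proof. by case: hA => [[_ _ h _]] _ _ _; apply/h. Qed.

Lemma st_st a : st (st a) = a.
Proof. by case: hA => [[_ _ _ h]] _ _ _; apply/h. Qed.

Lemma cstar a : n (st a * a) = n a ^+ 2.
Proof. by case: hA => _ _ h _; apply/h. Qed.

Lemma st_pos a : cpositive st a -> st a = a.
Proof. by case=> b ->; rewrite st_mul st_st. Qed.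

Lemma n_sum (I : finType) (f : I -> A) : n (\sum_i f i) <= \sum_i n (f i).
Proof.
apply: (big_ind2 (fun x y => n x <= y)); first by rewrite n0.
  by move=> x1 y1 x2 y2 h1 h2; apply: le_trans (nD _ _) (lerD h1 h2).
by [].
Qed.

Lemma n1_gt0 : 0 < n 1.
Proof.
rewrite lt_def n_ge0 andbT; apply/eqP => /n_eq0 /eqP; by rewrite oner_eq0.
Qed.

End Norm.

Section Mod.
Variable R : realType.
Variables (A B : algType R[i]).
Variables (stA : A -> A) (nA : A -> R) (stB : B -> B) (nB : B -> R).
Hypothesis hA : is_cstar_algebra stA nA.
Hypothesis hB : is_cstar_algebra stB nB.
Variables (E : lmodType R[i]) (lb : B -> E -> E) (ra : E -> A -> E)
  (ipB : E -> E -> B) (ipA : E -> E -> A).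
Hypothesis hE : hilbert_bimodule stA nA stB nB lb ra ipB ipA.
Hypothesis fullA : full_ip nA ipA.

Lemma ipA_x0 x : ipA x 0 = 0.
Proof.
case: hE => _ [_ [h _ _ _] _ _ _] _ _.
have H : ipA x 0 + ipA x 0 = ipA x 0 + 0 by rewrite -h !addr0.
exact: addrI H.
Qed.

Lemma ra_sub z c d : ra z (c - d) = ra z c - ra z d.
Proof.
case: hE => _ [[_ h _ _ _] _ _ _ _] _ _.
by apply/eqP; rewrite eq_sym subr_eq -h subrK.
Qed.

Lemma faith c : (forall z, ra z c = 0) -> c = 0.
Proof.
move=> H.
case: hE => _ [_ [_ _ hm _] _ _ _] _ _.
have Hs : forall s : seq ((R[i] * E) * E),
    (\sum_(p <- s) p.1.1 *: ipA p.1.2 p.2) * c = 0.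
  move=> s; rewrite mulr_suml big1_seq // => p _.
  by rewrite -scalerAl -hm H ipA_x0 scaler0.
have hh : (0:R) < 1 / 2 by rewrite divr_gt0.
have [s Hn] := fullA 1 hh.
have H1 : c = (1 - \sum_(p <- s) p.1.1 *: ipA p.1.2 p.2) * c.
  by rewrite mulrBl Hs subr0 mul1r.
apply: (n_eq0 hA); apply/eqP; rewrite eq_le (n_ge0 hA) andbT.
have := nM hA (1 - \sum_(p <- s) p.1.1 *: ipA p.1.2 p.2) c; rewrite -H1 => H2.
have H3 := n_ge0 hA c.
have H4 : nA (1 - \sum_(p <- s) p.1.1 *: ipA p.1.2 p.2) <= 1 / 2 by exact: ltW.
nra.
Qed.

Lemma faith2 c d : (forall z, ra z c = ra z d) -> c = d.
Proof.
move=> H; apply/eqP; rewrite -subr_eq0; apply/eqP/faith => z.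
by rewrite ra_sub H subrr.
Qed.

Lemma ipA_lb w b y : ipA w (lb b y) = ipA (lb (stB b) w) y.
Proof.
case: hE => [[[_ _ lbM _ _] [_ _ ipBl symB] _ _ _]] _ _ hbim.
apply: faith2 => z; rewrite -!hbim lbM -[ipB z (lb _ w)]symB ipBl.
by rewrite (st_mul hB) (st_st hB) symB.
Qed.

Lemma ipA_lb1 x y : ipA (lb 1 x) y = ipA x y.
Proof.
case: hE => [[[_ _ lbM _ _] [_ _ ipBl symB] _ _ _]] _ _ hbim.
apply: faith2 => z; rewrite -!hbim -[ipB z (lb _ x)]symB ipBl mul1r.
by rewrite symB.
Qed.

Lemma ipA_raL x u y : ipA (ra x u) y = stA u * ipA x y.
Proof.
case: hE => _ [_ [_ _ ipAr symA] _ _ _] _ _.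
by rewrite -[ipA (ra x u) y]symA ipAr (st_mul hA) symA.
Qed.

Lemma ipA_raR x u y : ipA x (ra y u) = ipA x y * u.
Proof. by case: hE => _ [_ [_ _ ipAr symA] _ _ _] _ _; apply: ipAr. Qed.

End Mod.

Lemma small_le0 (R : realType) (x K : R) : 0 <= K ->
  (forall e, 0 < e -> x <= e * K) -> x <= 0.
Proof.
move=> K0 H; case: (lerP x 0) => // hx.
have K1 : 0 < K + 1 by lra.
set y := x / (K + 1).
have hy : 0 < y by rewrite divr_gt0.
have hyx : y * (K + 1) = x by rewrite /y mulfVK // gt_eqF.
have := H y hy; nra.
Qed.

Unset Implicit Arguments.

Theorem corollary5p3 (R : realType) (G : finGroupType)
  (A B : algType R[i])
  (stA : A -> A) (nA : A -> R) (stB : B -> B) (nB : B -> R)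
  (hA : is_cstar_algebra stA nA) (hB : is_cstar_algebra stB nB)
  (alpha : G -> A -> A) (beta : G -> B -> B)
  (halpha : cstar_action stA alpha) (hbeta : cstar_action stB beta)
  (E : lmodType R[i]) (lb : B -> E -> E) (ra : E -> A -> E)
  (ipB : E -> E -> B) (ipA : E -> E -> A)
  (hE : hilbert_bimodule stA nA stB nB lb ra ipB ipA)
  (fullA : full_ip nA ipA) (fullB : full_ip nB ipB)
  (eta : G -> E -> E)
  (heta : compatible_action lb ra ipB ipA alpha beta eta) :
  rokhlin stA nA stB nB lb ra ipA alpha beta ->
  outer stA stB lb ra eta.
Proof.
move=> rok t t1 u u' [uu1 uu2] [uu'1 uu'2] Heta.
case: heta => _ _ _ [_ _ _ etaA].
case: halpha => /(_ t) [[alD alZ] alM al1 _ _] _ _.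
have Hip x y : alpha t (ipA x y) = stA u * ipA x y * u.
  rewrite -etaA Heta /Ad (ipA_raL hA hE) (ipA_raR hE) (ipA_lb hA hB hE fullA).
  rewrite (st_st hB).
  case: (hE) => [[[_ _ lbM _ _] _ _ _ _]] _ _ _.
  by rewrite lbM uu'2 (ipA_lb1 hA hE fullA) mulrA.
have al0 : alpha t 0 = 0.
  have h := alD 0 0; rewrite addr0 in h.
  by apply: (@addrI _ (alpha t 0)); rewrite addr0 -h.
have alN x : alpha t (- x) = - alpha t x.
  by rewrite -scaleN1r alZ scaleN1r.
have alB x y : alpha t (x - y) = alpha t x - alpha t y by rewrite alD alN.
have Hspan (s : seq ((R[i] * E) * E)) :
    alpha t (\sum_(p <- s) p.1.1 *: ipA p.1.2 p.2) =
    stA u * (\sum_(p <- s) p.1.1 *: ipA p.1.2 p.2) * u.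
  elim: s => [|p s IH]; first by rewrite !big_nil al0 mulr0 mul0r.
  by rewrite !big_cons alD IH alZ Hip mulrDr mulrDl -scalerAr -scalerAl.
have Hall a : alpha t a = stA u * a * u.
  apply/eqP; rewrite -subr_eq0; apply/eqP/(n_eq0 hA)/eqP.
  rewrite eq_le (n_ge0 hA) andbT.
  apply: (small_le0 (K := nA (stA u) * (nA (u * alpha t a) + nA (a * u)))).
    by rewrite mulr_ge0 ?addr_ge0 ?(n_ge0 hA).
  move=> e he.
  have [s Hs] := fullA 1 e he.
  set S := \sum_(p <- s) p.1.1 *: ipA p.1.2 p.2 in Hs *.
  have HS : alpha t S = stA u * S * u := Hspan s.
  have HSa : alpha t (S * a) = stA u * (S * a) * u.
    have -> : S * a = \sum_(p <- [seq (p.1, ra p.2 a) | p <- s])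
        p.1.1 *: ipA p.1.2 p.2.
      rewrite /S mulr_suml big_map; apply: eq_bigr => p _ /=.
      by rewrite (ipA_raR hE) scalerAl.
    by rewrite Hspan.
  have e1 : a = S * a + (1 - S) * a by rewrite -mulrDl addrC subrK mul1r.
  have e2 : alpha t (1 - S) = stA u * (1 - S) * u.
    by rewrite alB al1 HS mulrBr mulrBl mulr1 uu1.
  have -> : alpha t a - stA u * a * u =
      stA u * (1 - S) * (u * alpha t a) - stA u * (1 - S) * (a * u).
    have E3 : alpha t a = stA u * (1 - S) * u * alpha t a + stA u * (S * a) * u.
      by rewrite {1}e1 alD HSa alM e2 addrC.
    have E4 : stA u * a * u = stA u * (S * a) * u + stA u * ((1 - S) * a) * u.
      by rewrite -mulrDl -mulrDr -e1.
    by rewrite {1}E3 E4 addrKA !mulrA.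
  apply: le_trans (nSub hA _ _) _.
  apply: le_trans (lerD (nM hA _ _) (nM hA _ _)) _.
  have hX : nA (stA u * (1 - S)) <= nA (stA u) * e.
    apply: le_trans (nM hA _ _) _.
    by rewrite ler_wpM2l ?(n_ge0 hA) // ltW.
  have h1 := n_ge0 hA (u * alpha t a).
  have h2 := n_ge0 hA (a * u).
  have h3 := n_ge0 hA (stA u * (1 - S)).
  nra.
set K0 := nA (stA u).
have K0ge : 0 <= K0 := n_ge0 hA _.
set N := nA 1.
have Ngt : 0 < N := n1_gt0 hA.
have Gpos : (0 : R) < #|G|%:R by rewrite ltr0n; apply/card_gt0P; exists 1%g.
set M := N / (2 * #|G|%:R).
have Mgt : 0 < M by rewrite divr_gt0 // mulr_gt0.
set e := Num.min (N / 2) (M ^+ 2 / (1 + K0)).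
have egt : 0 < e by rewrite lt_min !divr_gt0 // ?exprn_gt0 //; lra.
have e1 : e <= N / 2 by rewrite ge_min lexx.
have e2 : e <= M ^+ 2 / (1 + K0) by rewrite ge_min lexx orbT.
have e2' : (1 + K0) * e <= M ^+ 2.
  by rewrite mulrC -ler_pdivlMr; [exact: e2 | lra].
have [a [b [[apos _ aorth _] [_ Hsum _ _] Hal _ [_ _ Hcomm _]]]] :=
  rok e egt [::] [::] [::] [:: u; 1].
have Hag g : nA (a g) < M.
  have tg : g != (t * g)%g.
    apply/eqP => h; move/eqP: t1; apply.
    by apply: (mulIg g); rewrite -h mul1g.
  have Hort := aorth _ _ tg.
  have h1 := Hal g t.
  have h2 : nA (a g * u - u * a g) < e by apply: Hcomm; rewrite inE eqxx.
  rewrite Hall in h1.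
  have h3 : nA (stA u * a g * u - a g) <= K0 * e.
    have -> : stA u * a g * u - a g = stA u * (a g * u - u * a g).
      by rewrite mulrBr !mulrA uu1 mul1r.
    apply: le_trans (nM hA _ _) _.
    by rewrite ler_wpM2l // ltW.
  have h4 : nA (a g - a (t * g)%g) < (1 + K0) * e.
    have -> : a g - a (t * g)%g =
      - (stA u * a g * u - a g) + (stA u * a g * u - a (t * g)%g).
      by rewrite opprB addrA subrK.
    apply: le_lt_trans (nD hA _ _) _; rewrite (nN hA); lra.
  have [hp hc] : positive_contraction stA nA (a g) := apos g.
  have hst := st_pos hA hp.
  have h5 : nA (a g) ^+ 2 <= nA (a g) * nA (a g - a (t * g)%g).
    rewrite -(cstar hA) hst.
    have -> : a g * a g = a g * (a g - a (t * g)%g) by rewrite mulrBr Hort subr0.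
    exact: nM hA _ _.
  have h6 := n_ge0 hA (a g).
  have h7 := n_ge0 hA (a g - a (t * g)%g).
  nra.
have Hs1 : nA (\sum_(g : G) a g - 1) < e.
  by have := Hsum 1; rewrite !inE eqxx orbT mulr1 => /(_ isT).
have Hs2 : nA (\sum_(g : G) a g) <= N / 2.
  apply: le_trans (n_sum hA _) _.
  apply: le_trans (_ : \sum_(g : G) M <= _).
    by apply: ler_sum => g _; apply: ltW.
  rewrite sumr_const -[_ *+ _]mulr_natr /M.
  have -> : #|(xpredT : pred G)| = #|G| by [].
  have -> : N / (2 * #|G|%:R) * #|G|%:R = N / 2.
    by field; rewrite gt_eqF.
  by [].
have : N <= nA (\sum_(g : G) a g) + nA (\sum_(g : G) a g - 1).
  rewrite /N -{1}(_ : \sum_(g : G) a g - (\sum_(g : G) a g - 1) = 1).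
    exact: nSub hA _ _.
  by rewrite opprB addrC subrK.
lra.
Qed.
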